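(* For every integer $n\ge 0$, $|\mathfrak D^1_{2n}(1342,1423)|=s_{n+1}$, where $s_m$ is the $m$th little Schröder number.
   Context: A Dumont permutation of the first kind of length $2n$ is a permutation $\pi\in\mathfrak S_{2n}$ such that for every $i=1,\dots,2n$: if $\pi(i)$ is even then $i<2n$ and $\pi(i)>\pi(i+1)$; if $\pi(i)$ is odd then $i=2n$ or $\pi(i)<\pi(i+1)$. $\mathfrak D^1_{2n}$ denotes the set of these ($\mathfrak D^1_0$ consists of the empty permutation). A permutation $\sigma$ contains a pattern $\tau\in\mathfrak S_k$ if some subsequence $(\sigma(i_1),\dots,\sigma(i_k))$, $i_1<\dots<i_k$, is order-isomorphic to $\tau$; otherwise $\sigma$ avoids $\tau$. $\mathfrak D^1_{2n}(T)$ denotes the set of permutations in $\mathfrak D^1_{2n}$ avoiding every pattern in $T$. The little Schröder numbers $s_1,s_2,\dots$ ($1,1,3,11,45,\dots$) are defined by the generating function $\sum_{m\ge 1}s_mx^m=\frac{1+x-\sqrt{1-6x+x^2}}{4}$. *)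

(* Defs.v *)
From mathcomp Require Import all_boot all_order all_algebra all_fingroup.
Set Implicit Arguments. Unset Strict Implicit. Unset Printing Implicit Defensive.
Import GRing.Theory Num.Theory.

(* One-line notation of s : 'S_m, with 1-based values: [s(1); ...; s(m)]. *)
Definition word (m : nat) (s : 'S_m) : seq nat :=
  [seq (val (s i)).+1 | i <- enum 'I_m].

Definition dumont1_word (w : seq nat) : bool :=
  [forall i : 'I_(size w),
     if ~~ odd (nth 0 w i)
     then (i.+1 < size w) && (nth 0 w i.+1 < nth 0 w i)
     else (i.+1 == size w) || (nth 0 w i < nth 0 w i.+1)].

Definition dumont1 (m : nat) (s : 'S_m) : bool := dumont1_word (word s).

Definition contains (w tau : seq nat) : bool :=
  [exists b : (size w).-tuple bool,
     let u := mask b w in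
     (size u == size tau) &&
     [forall x : 'I_(size tau), forall y : 'I_(size tau),
        (nth 0 u x < nth 0 u y) == (nth 0 tau x < nth 0 tau y)]].

Definition avoids (w tau : seq nat) : bool := ~~ contains w tau.

(* Little Schroeder numbers s_0 = 0, s_1 = 1, 1, 3, 11, 45, ...:
   the coefficients of S(x) = (1 + x - sqrt(1 - 6x + x^2))/4, i.e. the unique
   power series with S(0) = 0 and 2 S^2 - (1 + x) S + x = 0; comparing
   coefficients of x^k:  s_k = 2 sum_{i=1}^{k-1} s_i s_{k-i} - s_{k-1} + [k = 1]. *)
Definition schr_next (l : seq int) : int :=
  let k := size l in
  (2 * \sum_(1 <= i < k) l`_i * l`_(k - i) - l`_(k.-1) + (k == 1%N)%:R)%R.

Fixpoint schr_list (m : nat) : seq int :=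
  match m with
  | 0 => [:: 0%R]
  | m'.+1 => let l := schr_list m' in rcons l (schr_next l)
  end.

Definition little_schroder (m : nat) : int := (schr_list m)`_m.

(* Main.v *)
Require Import Defs.
From mathcomp Require Import all_boot all_order all_algebra all_fingroup.
From mathcomp Require Import zify.
Set Implicit Arguments. Unset Strict Implicit. Unset Printing Implicit Defensive.

Definition rng N (w : seq nat) := forall x, x \in w -> 0 < x <= N.
Definition occG (P : nat -> nat -> nat -> nat -> Prop) (w : seq nat) :=
  exists i j k l, [/\ i < j, j < k, k < l, l < size w &
    P (nth 0 w i) (nth 0 w j) (nth 0 w k) (nth 0 w l)].
Definition P1 (x y z t : nat) := x < t /\ t < y /\ y < z.
Definition P2 (x y z t : nat) := x < z /\ z < t /\ t < y.


Definition dumP (w : seq nat) := forall i, i < size w ->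
  if odd (nth 0 w i) then i.+1 = size w \/ nth 0 w i < nth 0 w i.+1
  else i.+1 < size w /\ nth 0 w i.+1 < nth 0 w i.

Lemma dum_prefix (A r : seq nat) c : dumP (A ++ c :: r) -> (forall x, x \in A -> x < c) -> dumP A.
Proof.
move=> H Hc t Ht; have := H t; rewrite size_cat /= !nth_cat Ht => /(_ ltac:(lia)).
have HA : nth 0 A t \in A by rewrite mem_nth.
move: (Hc _ HA) => HcA.
case: (ltnP t.+1 (size A)) => Ht1.
  by case: (odd _); case; lia.
have -> : t.+1 = size A by lia.
rewrite subnn /=.
by case: (odd _); case; lia.
Qed.

Lemma dum_suffix (A r : seq nat) : dumP (A ++ r) -> dumP r.
Proof.
move=> H t Ht; have := H (size A + t); rewrite size_cat !nth_cat.
have E1 : (size A + t < size A) = false by lia.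
have E2 : ((size A + t).+1 < size A) = false by lia.
rewrite E1 E2 addKn -addnS addKn.
move/(_ ltac:(lia)).
by case: (odd _); case; lia.
Qed.

Lemma dum_cat (A r : seq nat) c : dumP A -> dumP (c :: r) -> (forall x, x \in A -> x < c) ->
  dumP (A ++ c :: r).
Proof.
move=> HA Hr Hc t; rewrite size_cat => Ht.
case: (ltnP t (size A)) => Hts.
  have := HA t Hts; have HAt : nth 0 A t \in A by rewrite mem_nth.
  move: (Hc _ HAt) => HcA.
  rewrite !nth_cat Hts.
  case: (ltnP t.+1 (size A)) => Ht1.
    by case: (odd _); case; lia.
  have -> : t.+1 - size A = 0 by lia.
  by rewrite /=; case: (odd _); case; lia.
have := Hr (t - size A) ltac:(lia).
have E1 : (t < size A) = false by lia.
have E2 : (t.+1 < size A) = false by lia.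
rewrite !nth_cat E1 E2 subSn //.
by case: (odd _); case; rewrite /=; lia.
Qed.

Lemma dum_cons c (r : seq nat) : dumP r ->
  (if odd c then r = [::] \/ c < nth 0 r 0 else 0 < size r /\ nth 0 r 0 < c) -> dumP (c :: r).
Proof.
move=> Hr Hc [|t] /= Ht.
  by case: (odd c) Hc => /= [[->|h]|[h1 h2]]; [left | right | split].
by have := Hr t Ht; case: (odd _); case; lia.
Qed.

Lemma dum_shift k (a : seq nat) : ~~ odd k -> dumP (map (addn k) a) <-> dumP a.
Proof.
move=> Hk; split => H t Ht.
  have := H t; rewrite size_map (nth_map 0) // => /(_ Ht).
  case: (ltnP t.+1 (size a)) => Ht1.
    rewrite (nth_map 0) // oddD (negbTE Hk) /=.
    by case: (odd _); case; lia.
  rewrite oddD (negbTE Hk) /=.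
  by case: (odd _); case; lia.
rewrite size_map in Ht.
have := H t Ht; rewrite size_map (nth_map 0) // oddD (negbTE Hk) /=.
case: (ltnP t.+1 (size a)) => Ht1.
  rewrite (nth_map 0) //.
  by case: (odd _); case; lia.
by case: (odd _); case; lia.
Qed.

Lemma occ_catl P (u v : seq nat) : occG P u -> occG P (u ++ v).
Proof.
case=> i [j [k [l [ij jk kl lu H]]]].
exists i, j, k, l; rewrite size_cat !nth_cat.
rewrite (ltn_trans ij (ltn_trans jk (ltn_trans kl lu))) (ltn_trans jk (ltn_trans kl lu)).
by rewrite (ltn_trans kl lu) lu; split => //; lia.
Qed.

Lemma occ_catr P (u v : seq nat) : occG P v -> occG P (u ++ v).
Proof.
case=> i [j [k [l [ij jk kl lu H]]]].
exists (size u + i), (size u + j), (size u + k), (size u + l); rewrite size_cat !nth_cat.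
rewrite !ltnNge !leq_addr /= !addKn; split => //; lia.
Qed.

Lemma occ_shift P k (a : seq nat) :
  (forall x y z t, P x y z t -> P (k + x) (k + y) (k + z) (k + t)) ->
  occG P a -> occG P (map (addn k) a).
Proof.
move=> HP [i [j [k' [l [ij jk kl lu H]]]]].
exists i, j, k', l; rewrite size_map !(nth_map 0) //; try lia.
by split => //; apply: HP.
Qed.

Lemma occ_unshift P k (a : seq nat) :
  (forall x y z t, P (k + x) (k + y) (k + z) (k + t) -> P x y z t) ->
  occG P (map (addn k) a) -> occG P a.
Proof.
move=> HP [i [j [k' [l [ij jk kl lu H]]]]].
rewrite size_map in lu.
exists i, j, k', l; split => //; apply: HP.
by rewrite !(nth_map 0) in H; try lia.
Qed.

Lemma nth_rng M (s : seq nat) t : rng M s -> t < size s -> 0 < nth 0 s t <= M.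
Proof. by move=> R Ht; apply: R; rewrite mem_nth. Qed.

Lemma regB k N (a b : seq nat) t :
  rng (size a) a -> rng (size b) b ->
  t < size (map (addn k) a ++ N :: (b ++ [:: N.-1])) ->
  let w := map (addn k) a ++ N :: (b ++ [:: N.-1]) in
  (t < size a /\ nth 0 w t = k + nth 0 a t /\ 0 < nth 0 a t <= size a) \/
 (      t = size a /\ nth 0 w t = N) \/
 (      size a < t < size a + 1 + size b /\ nth 0 w t = nth 0 b (t - (size a).+1) /\
         0 < nth 0 b (t - (size a).+1) <= size b) \/
   (t = size a + 1 + size b /\ nth 0 w t = N.-1).
Proof.
move=> Ra Rb Ht w; rewrite /w nth_cat size_map.
case: (ltnP t (size a)) => h1.
  by left; rewrite (nth_map 0) //; split => //; split => //; apply: nth_rng.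
case: (ltnP (size a) t) => h2; last first.
  by right; left; rewrite (_ : t = size a); [rewrite subnn; split|lia].
have [u E] : exists u, t = size a + 1 + u by exists (t - (size a).+1); lia.
subst t.
rewrite (_ : size a + 1 + u - (size a).+1 = u); last lia.
rewrite (_ : size a + 1 + u - size a = u.+1); last lia.
rewrite /= nth_cat.
case: (ltnP u (size b)) => h3.
  right; right; left; split; first lia.
  by split => //; exact: nth_rng Rb h3.
rewrite size_cat /= size_cat /= in Ht; rewrite size_map in Ht.
right; right; right; have e : u - size b = 0 by lia.
by rewrite e; split => //; lia.
Qed.

Lemma regA k N (a b : seq nat) t :
  rng (size a) a -> rng (size b) b ->
  t < size (map (addn k) a ++ [:: N.-1, N & b]) ->
  let w := map (addn k) a ++ [:: N.-1, N & b] in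
  (t < size a /\ nth 0 w t = k + nth 0 a t /\ 0 < nth 0 a t <= size a) \/
 (      t = size a /\ nth 0 w t = N.-1) \/
 (t = size a + 1 /\ nth 0 w t = N) \/
 (size a + 1 < t < size a + 2 + size b /\ nth 0 w t = nth 0 b (t - (size a).+2) /\
         0 < nth 0 b (t - (size a).+2) <= size b).
Proof.
move=> Ra Rb Ht w; rewrite /w nth_cat size_map.
case: (ltnP t (size a)) => h1.
  by left; rewrite (nth_map 0) //; split => //; split => //; apply: nth_rng.
case: (ltnP (size a) t) => h2; last first.
  by right; left; rewrite (_ : t = size a); [rewrite subnn; split|lia].
case: (ltnP (size a).+1 t) => h3; last first.
  right; right; left; rewrite (_ : t - size a = 1); last lia.
  by split => //; lia.
rewrite size_cat /= size_map in Ht.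
have [u E] : exists u, t = size a + 2 + u by exists (t - (size a).+2); lia.
subst t.
rewrite (_ : size a + 2 + u - (size a).+2 = u); last lia.
rewrite (_ : size a + 2 + u - size a = u.+2); last lia.
right; right; right; split; first lia.
by split => //; apply: nth_rng => //; lia.
Qed.

Definition bA n m (a b : seq nat) := map (addn m.*2) a ++ [:: n.*2.-1, n.*2 & b].
Definition bB n m (a b : seq nat) := map (addn m.*2) a ++ n.*2 :: (b ++ [:: n.*2.-1]).

Ltac split4 := 
  match goal with
  | [ Ri : _ \/ _ \/ _ \/ _ |- _ ] => case: Ri => [Ri|[Ri|[Ri|Ri]]]; try lia
  end.

Ltac noocc_tac P kk NN a b Na Nb regX off :=
  let i := fresh "i" in let j' := fresh "j" in let k' := fresh "k" in let l := fresh "l" in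
  let ij := fresh in let jk := fresh in let kl := fresh in let lw := fresh in let H := fresh "H" in
  case=> i [j' [k' [l [ij jk kl lw H]]]];
  rewrite /bA /bB in lw H;
  let lw' := fresh "lw" in have lw' := lw; rewrite ?size_cat ?size_map /= ?size_cat /= in lw';
  pose proof (regX kk NN a b i ltac:(assumption) ltac:(assumption) ltac:(rewrite ?size_cat ?size_map /= ?size_cat /=; lia)) as Ri; cbv zeta in Ri;
  pose proof (regX kk NN a b j' ltac:(assumption) ltac:(assumption) ltac:(rewrite ?size_cat ?size_map /= ?size_cat /=; lia)) as Rj; cbv zeta in Rj;
  pose proof (regX kk NN a b k' ltac:(assumption) ltac:(assumption) ltac:(rewrite ?size_cat ?size_map /= ?size_cat /=; lia)) as Rk; cbv zeta in Rk;
  pose proof (regX kk NN a b l ltac:(assumption) ltac:(assumption) ltac:(rewrite ?size_cat ?size_map /= ?size_cat /=; lia)) as Rl; cbv zeta in Rl;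
  assert (hA : ~ (l < size a /\ P (nth 0 a i) (nth 0 a j') (nth 0 a k') (nth 0 a l)))
    by (case=> hl hP; apply: Na; exists i, j', k', l; by []);
  assert (hB : ~ (off <= i /\ l < off + size b /\ P (nth 0 b (i - off)) (nth 0 b (j' - off))
           (nth 0 b (k' - off)) (nth 0 b (l - off))))
    by (case=> hi [hl hP]; apply: Nb;
        exists (i - off), (j' - off), (k' - off), (l - off); split => //; lia);
  move: H hA hB Ri Rj Rk Rl; rewrite /P;
  set wi := nth 0 _ i; set wj := nth 0 _ j'; set wk := nth 0 _ k'; set wl := nth 0 _ l;
  move=> H hA hB Ri Rj Rk Rl;
  split4; split4; split4; split4.

Lemma noocc_B1 j m (a b : seq nat) : rng (size a) a -> rng (size b) b ->
  size a = j.*2 -> size b = m.*2 -> ~ occG P1 a -> ~ occG P1 b ->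
  ~ occG P1 (bB (j + m + 1) m a b).
Proof. move=> Ra Rb Sa Sb Na Nb. noocc_tac P1 (m.*2) ((j + m + 1).*2) a b Na Nb regB (size a).+1. Qed.

Lemma noocc_B2 j m (a b : seq nat) : rng (size a) a -> rng (size b) b ->
  size a = j.*2 -> size b = m.*2 -> ~ occG P2 a -> ~ occG P2 b ->
  ~ occG P2 (bB (j + m + 1) m a b).
Proof. move=> Ra Rb Sa Sb Na Nb. noocc_tac P2 (m.*2) ((j + m + 1).*2) a b Na Nb regB (size a).+1. Qed.

Lemma noocc_A1 j m (a b : seq nat) : rng (size a) a -> rng (size b) b ->
  size a = j.*2 -> size b = m.*2 -> ~ occG P1 a -> ~ occG P1 b ->
  ~ occG P1 (bA (j + m + 1) m a b).
Proof. move=> Ra Rb Sa Sb Na Nb. noocc_tac P1 (m.*2) ((j + m + 1).*2) a b Na Nb regA (size a).+2. Qed.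

Lemma noocc_A2 j m (a b : seq nat) : rng (size a) a -> rng (size b) b ->
  size a = j.*2 -> size b = m.*2 -> ~ occG P2 a -> ~ occG P2 b ->
  ~ occG P2 (bA (j + m + 1) m a b).
Proof. move=> Ra Rb Sa Sb Na Nb. noocc_tac P2 (m.*2) ((j + m + 1).*2) a b Na Nb regA (size a).+2. Qed.

Lemma subseq_idx (u w : seq nat) : subseq u w -> exists f : nat -> nat,
  (forall x, x < size u -> f x < size w /\ nth 0 u x = nth 0 w (f x)) /\
  (forall x, x.+1 < size u -> f x < f x.+1).
Proof.
elim: w u => [|y w IH] u.
  by rewrite subseq0 => /eqP ->; exists id.
case: u => [|x u]; first by move=> _; exists id.
rewrite /=; case: eqP => [->|ne] H.
  have [f [Hf Hi]] := IH u H.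
  exists (fun x => if x is x'.+1 then (f x').+1 else 0); split.
    by case=> [|x'] //= Hx; have [? ?] := Hf x' Hx.
  by case=> [|x'] /= Hx; [by [] | exact: Hi].
have [f [Hf Hi]] := IH _ H.
exists (fun x => (f x).+1); split.
  by move=> x' Hx; have [? ?] := Hf x' Hx.
by move=> x' Hx; have := Hi x' Hx.
Qed.

Lemma sub_step d i (s w : seq nat) : d <= i -> i < size w -> subseq s (drop i.+1 w) ->
  subseq (nth 0 w i :: s) (drop d w).
Proof.
move=> Hd Hi Hs.
rewrite -(cat_take_drop (i - d) (drop d w)) drop_drop subnK //.
rewrite (drop_nth 0 Hi).
apply: subseq_trans (suffix_subseq _ _).
by rewrite /= eqxx.
Qed.

Lemma perm_iota1P N (w : seq nat) : perm_eq w (iota 1 N) <-> [/\ uniq w, size w = N & rng N w].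
Proof.
split.
  move=> H; split.
  - by rewrite (perm_uniq H) iota_uniq.
  - by rewrite (perm_size H) size_iota.
  - by move=> x; rewrite (perm_mem H) mem_iota; lia.
case=> U S R; apply: uniq_perm => //; first exact: iota_uniq.
have Hsub : {subset w <= iota 1 N}.
  by move=> x /R; rewrite mem_iota; lia.
have Hle : size (iota 1 N) <= size w by rewrite size_iota S.
by have [_ E] := uniq_min_size U Hsub Hle.
Qed.

Lemma word_inj N : injective (@word N).
Proof.
move=> s t /eq_in_map H; apply/permP => i.
have := H i; rewrite mem_enum => /(_ isT) [] E.
exact: val_inj.
Qed.

Lemma word_perm N (s : 'S_N) : perm_eq (word s) (iota 1 N).
Proof.
apply/perm_iota1P; split.
- rewrite /word map_inj_uniq ?enum_uniq //.
  by move=> x y [] /val_inj /perm_inj.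
- by rewrite /word size_map size_enum_ord.
- by move=> x /mapP [i _ ->] /=; rewrite ltn_ord.
Qed.

Lemma perm_word N (w : seq nat) : perm_eq w (iota 1 N) -> exists s : 'S_N, word s = w.
Proof.
case/perm_iota1P => U S R.
pose f := fun i : 'I_N => (nth 0 w i).-1.
have fN : forall i : 'I_N, f i < N.
  move=> i; rewrite /f; have : nth 0 w i \in w by rewrite mem_nth // S.
  by move/R; lia.
pose g := fun i : 'I_N => Ordinal (fN i).
have ginj : injective g.
  move=> i j [] E; apply: val_inj => /=.
  have Hi : nth 0 w i \in w by rewrite mem_nth // S.
  have Hj : nth 0 w j \in w by rewrite mem_nth // S.
  move: (R _ Hi) (R _ Hj) => Ri Rj.
  apply/eqP; rewrite -(nth_uniq 0 _ _ U) ?S //.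
  rewrite /f in E.
  have e : nth 0 w i = nth 0 w j by move: E Ri Rj; clear; lia.
  by rewrite e.
exists (perm ginj).
rewrite /word.
have -> : [seq (val (perm ginj i)).+1 | i <- enum 'I_N] = [seq nth 0 w i | i : 'I_N <- enum 'I_N].
  apply: eq_map => i; rewrite permE /= /f.
  have Hi : nth 0 w i \in w by rewrite mem_nth // S.
  by move: (R _ Hi); lia.
have -> : [seq nth 0 w i | i : 'I_N <- enum 'I_N] = map (nth 0 w) (map val (enum 'I_N)).
  by rewrite -map_comp.
rewrite val_enum_ord.
by rewrite -S -/(mkseq _ _) mkseq_nth.
Qed.

Lemma contains_occ1 w : contains w [:: 1; 3; 4; 2] <-> occG P1 w.
Proof.
split.
  case/existsP => b /andP [/eqP Hs /forallP H].
  have [f [Hf Hinc]] := subseq_idx (mask_subseq b w).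
  have E := fun x y => forallP (H x) y.
  have h03 := E (@Ordinal 4 0 erefl) (@Ordinal 4 3 erefl).
  have h31 := E (@Ordinal 4 3 erefl) (@Ordinal 4 1 erefl).
  have h12 := E (@Ordinal 4 1 erefl) (@Ordinal 4 2 erefl).
  rewrite /= in h03 h31 h12.
  have [f0 e0] := Hf 0 ltac:(by rewrite Hs).
  have [f1 e1] := Hf 1 ltac:(by rewrite Hs).
  have [f2 e2] := Hf 2 ltac:(by rewrite Hs).
  have [f3 e3] := Hf 3 ltac:(by rewrite Hs).
  have i01 := Hinc 0 ltac:(by rewrite Hs).
  have i12 := Hinc 1 ltac:(by rewrite Hs).
  have i23 := Hinc 2 ltac:(by rewrite Hs).
  exists (f 0), (f 1), (f 2), (f 3).
  rewrite /P1 -e0 -e1 -e2 -e3.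
  split => //; split; [by move/eqP: h03 | split; [by move/eqP: h31 | by move/eqP: h12]].
case=> i [j [k [l [ij jk kl lw [h1 [h2 h3]]]]]].
have Hsub : subseq [:: nth 0 w i; nth 0 w j; nth 0 w k; nth 0 w l] w.
  rewrite -[w in subseq _ w]drop0.
  apply: sub_step => //; first by lia.
  apply: sub_step => //; first by lia.
  apply: sub_step => //; first by lia.
  by apply: sub_step => //; rewrite sub0seq.
case/subseqP: Hsub => m Hm Em.
apply/existsP; exists (Tuple (introT eqP Hm)).
rewrite /= -Em /=; apply/forallP => x; apply/forallP => y.
case: x y => [[|[|[|[|x]]]] Hx] [[|[|[|[|y]]]] Hy] //=; apply/eqP; apply/idP/idP; lia.
Qed.

Lemma contains_occ2 w : contains w [:: 1; 4; 2; 3] <-> occG P2 w.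
Proof.
split.
  case/existsP => b /andP [/eqP Hs /forallP H].
  have [f [Hf Hinc]] := subseq_idx (mask_subseq b w).
  have E := fun x y => forallP (H x) y.
  have h02 := E (@Ordinal 4 0 erefl) (@Ordinal 4 2 erefl).
  have h23 := E (@Ordinal 4 2 erefl) (@Ordinal 4 3 erefl).
  have h31 := E (@Ordinal 4 3 erefl) (@Ordinal 4 1 erefl).
  rewrite /= in h02 h23 h31.
  have [f0 e0] := Hf 0 ltac:(by rewrite Hs).
  have [f1 e1] := Hf 1 ltac:(by rewrite Hs).
  have [f2 e2] := Hf 2 ltac:(by rewrite Hs).
  have [f3 e3] := Hf 3 ltac:(by rewrite Hs).
  have i01 := Hinc 0 ltac:(by rewrite Hs).
  have i12 := Hinc 1 ltac:(by rewrite Hs).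
  have i23 := Hinc 2 ltac:(by rewrite Hs).
  exists (f 0), (f 1), (f 2), (f 3).
  rewrite /P2 -e0 -e1 -e2 -e3.
  split => //; split; [by move/eqP: h02 | split; [by move/eqP: h23 | by move/eqP: h31]].
case=> i [j [k [l [ij jk kl lw [h1 [h2 h3]]]]]].
have Hsub : subseq [:: nth 0 w i; nth 0 w j; nth 0 w k; nth 0 w l] w.
  rewrite -[w in subseq _ w]drop0.
  apply: sub_step => //; first by lia.
  apply: sub_step => //; first by lia.
  apply: sub_step => //; first by lia.
  by apply: sub_step => //; rewrite sub0seq.
case/subseqP: Hsub => m Hm Em.
apply/existsP; exists (Tuple (introT eqP Hm)).
rewrite /= -Em /=; apply/forallP => x; apply/forallP => y.
case: x y => [[|[|[|[|x]]]] Hx] [[|[|[|[|y]]]] Hy] //=; apply/eqP; apply/idP/idP; lia.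
Qed.

Lemma dumontP w : dumont1_word w <-> dumP w.
Proof.
split.
  move/forallP => H i Hi; have := H (Ordinal Hi); rewrite /=.
  case: (odd _) => /=.
    by case/orP => [/eqP|]; [left|right].
  by case/andP.
move=> H; apply/forallP => i; have := H i (ltn_ord i).
case: (odd _) => /=.
  by case=> [->|->]; rewrite ?eqxx ?orbT.
by case=> -> ->.
Qed.

Definition goodP n (w : seq nat) := [/\ perm_eq w (iota 1 n.*2), dumP w, ~ occG P1 w & ~ occG P2 w].


Lemma perm_build j m (a b : seq nat) (mid : seq nat) :
  perm_eq a (iota 1 j.*2) -> perm_eq b (iota 1 m.*2) ->
  perm_eq mid [:: (j + m + 1).*2.-1; (j + m + 1).*2] ->
  perm_eq (map (addn m.*2) a ++ mid ++ b) (iota 1 (j + m + 1).*2).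
Proof.
move=> Ha Hb Hm.
have Ha' : perm_eq (map (addn m.*2) a) (iota (m.*2 + 1) j.*2).
  by rewrite iotaDl perm_map.
have -> : (j + m + 1).*2 = m.*2 + (j.*2 + 2) by lia.
rewrite iotaD iotaD.
have -> : iota (1 + m.*2 + j.*2) 2 = [:: (j + m + 1).*2.-1; (j + m + 1).*2].
  rewrite /=; congr [:: _; _]; lia.
move/seq.permP: Ha' => Ha'; move/seq.permP: Hb => Hb; move/seq.permP: Hm => Hm.
apply/seq.permP => p; rewrite !count_cat Ha' Hb Hm.
rewrite (_ : 1 + m.*2 = m.*2 + 1); last lia.
lia.
Qed.

Lemma good_B j m (a b : seq nat) : goodP j a -> goodP m b ->
  goodP (j + m + 1) (bB (j + m + 1) m a b).
Proof.
move=> [Pa Da N1a N2a] [Pb Db N1b N2b].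
have [Ua Sa Ra] := (perm_iota1P _ _).1 Pa.
have [Ub Sb Rb] := (perm_iota1P _ _).1 Pb.
have Ra' : rng (size a) a by rewrite Sa.
have Rb' : rng (size b) b by rewrite Sb.
split.
- rewrite /bB -cat1s catA.
  have E : perm_eq (map (addn m.*2) a ++ [:: (j + m + 1).*2] ++ b ++ [:: (j + m + 1).*2.-1])
             (map (addn m.*2) a ++ [:: (j + m + 1).*2.-1; (j + m + 1).*2] ++ b).
    rewrite perm_cat2l catA perm_catC catA perm_cat2r perm_catC /=.
    by rewrite (perm_catC [:: _] [:: _]).
  rewrite -catA; apply: perm_trans E _.
  exact: perm_build.
- rewrite /bB; apply: dum_cat.
  + by apply/dum_shift => //; rewrite odd_double.
  + apply: dum_cons.
      apply: dum_cat => //.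
        apply: dum_cons; first by case.
        have Ho : odd (j + m + 1).*2.-1 by lia.
        by rewrite Ho; left.
      by move=> x /Rb; lia.
    rewrite /= (_ : odd (j + m + 1).*2 = false); last by rewrite odd_double.
    split; first by rewrite size_cat /=; lia.
    case: b Rb {Pb Db N1b N2b Ub Sb Rb'} => [|y b] Rb /=; first lia.
    have := Rb y (mem_head _ _); lia.
  + by move=> x /mapP [y /Ra Hy ->]; lia.
- exact: noocc_B1.
- exact: noocc_B2.
Qed.

Lemma good_A j m (a b : seq nat) : 0 < m -> goodP j a -> goodP m b ->
  goodP (j + m + 1) (bA (j + m + 1) m a b).
Proof.
move=> m0 [Pa Da N1a N2a] [Pb Db N1b N2b].
have [Ua Sa Ra] := (perm_iota1P _ _).1 Pa.
have [Ub Sb Rb] := (perm_iota1P _ _).1 Pb.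
have Ra' : rng (size a) a by rewrite Sa.
have Rb' : rng (size b) b by rewrite Sb.
split.
- change (perm_eq (map (addn m.*2) a ++ [:: (j+m+1).*2.-1; (j+m+1).*2] ++ b) (iota 1 (j + m + 1).*2)).
  by apply: perm_build.
- rewrite /bA; apply: dum_cat.
  + by apply/dum_shift => //; rewrite odd_double.
  + apply: dum_cons.
      apply: dum_cons => //.
      rewrite /= (_ : odd (j + m + 1).*2 = false); last by rewrite odd_double.
      split; first lia.
      case: b Rb Sb {Pb Db N1b N2b Ub Rb'} => [|y b] Rb Sb /=; first lia.
      have := Rb y (mem_head _ _); lia.
    have Ho : odd (j + m + 1).*2.-1 by lia.
    by rewrite Ho; right; rewrite /=; lia.
  + by move=> x /mapP [y /Ra Hy ->]; lia.
- exact: noocc_A1.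
- exact: noocc_A2.
Qed.


Lemma uniq_catN (A B : seq nat) x y : uniq (A ++ B) -> x \in A -> y \in B -> x != y.
Proof.
rewrite cat_uniq => /and3P [_ H _] Hx Hy; apply/eqP => exy; subst.
by move/hasPn: H => /(_ y Hy); rewrite Hx.
Qed.

Lemma uniq_leq_sizeN (s t : seq nat) : uniq s -> {subset s <= t} -> size s <= size t.
Proof. exact: uniq_leq_size. Qed.

Lemma vals N (al mid be : seq nat) :
  perm_eq (al ++ mid ++ be) (iota 1 N) -> perm_eq mid [:: N.-1; N] -> 2 <= N ->
  (forall x y : nat, x \in al -> y \in be -> y < x) ->
  [/\ forall y : nat, y \in be -> 0 < y <= size be,
      forall x : nat, x \in al -> size be < x <= N - 2,
      N = size al + size be + 2, uniq al & uniq be].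
Proof.
move=> P Pm N2 Sep.
have [U S R] := (perm_iota1P _ _).1 P.
have Hmid : forall v : nat, (v \in mid) = (v == N.-1) || (v == N).
  by move=> v; rewrite (perm_mem Pm) !inE.
have Smid : size mid = 2 by rewrite (perm_size Pm).
have Ual : uniq al by move: U; rewrite cat_uniq => /and3P [].
have Ube : uniq be by move: U; rewrite catA cat_uniq => /and3P [_ _].
have Hw : forall v, 0 < v <= N -> [\/ v \in al, v \in mid | v \in be].
  move=> v Hv; have : v \in iota 1 N by rewrite mem_iota; lia.
  by rewrite -(perm_mem P) !mem_cat => /orP [->|/orP [->|->]]; [constructor 1|constructor 2|constructor 3].
have Rbe : forall y : nat, y \in be -> 0 < y <= N - 2.
  move=> y Hy; have := R y; rewrite !mem_cat Hy !orbT => /(_ isT) Ry.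
  have : y \notin mid.
    apply/negP => Hm.
    have := uniq_catN (A := al ++ mid) (B := be) (x := y) (y := y); rewrite -catA.
    by move/(_ U); rewrite mem_cat Hm orbT eqxx => /(_ isT Hy).
  by rewrite Hmid; lia.
have Ral : forall x : nat, x \in al -> 0 < x <= N - 2.
  move=> x Hx; have := R x; rewrite !mem_cat Hx => /(_ isT) Rx.
  have : x \notin mid.
    apply/negP => Hm.
    have := uniq_catN (A := al) (B := mid ++ be) (x := x) (y := x).
    by move/(_ U); rewrite mem_cat Hm eqxx => /(_ Hx isT).
  by rewrite Hmid; lia.
have Hbe : forall y : nat, y \in be -> 0 < y <= size be.
  move=> y Hy; have [Ry1 Ry2] := andP (Rbe y Hy); rewrite Ry1 /=.
  have Hsub : {subset iota 1 y <= be}.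
    move=> v; rewrite mem_iota => Hv.
    case: (Hw v ltac:(lia)) => // Hv'.
      by have := Sep v y Hv' Hy; lia.
    by move: Hv'; rewrite Hmid; lia.
  by have := uniq_leq_sizeN (iota_uniq 1 y) Hsub; rewrite size_iota.
split => //.
- move=> x Hx; have [Rx1 Rx2] := andP (Ral x Hx); rewrite Rx2 andbT.
  rewrite ltnNge; apply/negP => Hle.
  have Hsub : {subset be <= iota 1 x.-1}.
    by move=> v Hv; rewrite mem_iota; have := Sep x v Hx Hv; have := Rbe v Hv; lia.
  by have := uniq_leq_sizeN Ube Hsub; rewrite size_iota; lia.
- by move: S; rewrite !size_cat Smid; lia.
Qed.

Lemma parity k (al : seq nat) : dumP al -> uniq al -> (forall x : nat, x \in al -> k < x) ->
  k.+1 \in al -> odd k.+1.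
Proof.
move=> D U H Hk.
set t := index k.+1 al.
have Ht : t < size al by rewrite index_mem.
have := D t Ht; rewrite nth_index //.
case: (odd k.+1) => // [[Ht1 Hlt]].
have Hm : nth 0 al t.+1 \in al by rewrite mem_nth.
have := H _ Hm => Hgt.
have e : nth 0 al t.+1 = nth 0 al t by rewrite nth_index //; lia.
by have := nth_uniq 0 Ht1 Ht U; rewrite e eqxx => /esym /eqP; lia.
Qed.

Lemma nthD (A B : seq nat) i : nth 0 (A ++ B) (size A + i) = nth 0 B i.
Proof. by rewrite nth_cat ltnNge leq_addr /= addKn. Qed.

Lemma shift_good j k (al : seq nat) :
  ~~ odd k -> uniq al -> size al = j.*2 -> (forall x : nat, x \in al -> k < x <= k + size al) ->
  dumP al -> (~ occG P1 al) -> (~ occG P2 al) ->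
  goodP j (map (subn^~ k) al) /\ map (addn k) (map (subn^~ k) al) = al.
Proof.
move=> Hk U S H D N1 N2.
have Ea : map (addn k) (map (subn^~ k) al) = al.
  rewrite -map_comp map_id_in // => x /H /=; lia.
split => //.
split.
- apply/perm_iota1P; split.
  + rewrite map_inj_in_uniq // => x y /H Hx /H Hy /=; lia.
  + by rewrite size_map.
  + by move=> x /mapP [y /H Hy ->]; lia.
- by apply/(dum_shift _ Hk); rewrite Ea.
- move=> Ho; apply: N1; rewrite -Ea; apply: occ_shift Ho.
  by rewrite /P1 => x y z t; lia.
- move=> Ho; apply: N2; rewrite -Ea; apply: occ_shift Ho.
  by rewrite /P2 => x y z t; lia.
Qed.

Lemma caseA n (al be : seq nat) :
  goodP n.+1 (al ++ [:: n.+1.*2.-1, n.+1.*2 & be]) ->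
  exists j m a b, [/\ j + m = n, goodP j a, goodP m b, 0 < m &
     al ++ [:: n.+1.*2.-1, n.+1.*2 & be] = bA n.+1 m a b].
Proof.
set N := n.+1.*2 => -[Pw Dw N1 N2].
have [Uw Sw Rw] := (perm_iota1P _ _).1 Pw.
have Ew : al ++ [:: N.-1, N & be] = (al ++ [:: N.-1; N]) ++ be by rewrite -catA.
have Hbe0 : forall y : nat, y \in be -> y < N.-1.
  move=> y Hy.
  have Ry := Rw y; rewrite !mem_cat !inE Hy !orbT in Ry; have {}Ry := Ry isT.
  have U' := Uw; rewrite Ew in U'.
  have h1 := uniq_catN (x := N.-1) U' ltac:(by rewrite mem_cat !inE eqxx orbT) Hy.
  have h2 := uniq_catN (x := N) U' ltac:(by rewrite mem_cat !inE eqxx !orbT) Hy.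
  lia.
have Sep : forall x y : nat, x \in al -> y \in be -> y < x.
  move=> x y Hx Hy; rewrite ltnNge; apply/negP => Hle.
  have Hne := uniq_catN (y := y) Uw Hx ltac:(by rewrite !inE Hy !orbT).
  have Hy' := Hbe0 y Hy.
  apply: N1; exists (index x al), (size al), (size al + 1), (size al + 2 + index y be).
  have ix : index x al < size al by rewrite index_mem.
  have iy : index y be < size be by rewrite index_mem.
  split; try lia.
    by rewrite size_cat /=; lia.
  rewrite /P1 -addnA !nthD nth_cat ix nth_index // -(addn0 (size al)) nthD /= nth_index //.
  lia.
have N2' : 2 <= N by rewrite /N; lia.
have [Hbe Hal EN Ual Ube] := vals (mid := [:: N.-1; N]) Pw (perm_refl _) N2' Sep.
set k := size be.
have Dal : dumP al.
  apply: (dum_prefix (c := N.-1) (r := N :: be)) => //.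
  by move=> x /Hal; lia.
have Hk : ~~ odd k.
  case: (posnP (size al)) => Hs.
    by move: EN; rewrite Hs /N; lia.
  have Hk1 : k.+1 \in al.
    have : k.+1 \in iota 1 N by rewrite mem_iota; lia.
    rewrite -(perm_mem Pw) mem_cat !inE => /orP [] // /orP [/eqP|/orP [/eqP|/Hbe]]; lia.
  have := parity Dal Ual (fun x Hx => proj1 (andP (Hal x Hx))) Hk1; by rewrite /=; case: (odd k).
have [m Hm] : exists m, k = m.*2 by exists k./2; have := odd_double_half k; move: Hk; case: (odd k) => //= _ <-.
have [j Hj] : exists j, size al = j.*2 by exists (size al)./2; lia.
have [Ga Ea] := shift_good Hk Ual Hj (fun x Hx => ltac:(have := Hal x Hx; lia)) Dal
  (fun h => N1 (occ_catl _ h)) (fun h => N2 (occ_catl _ h)).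
have Db : dumP be by apply: (dum_suffix (A := al ++ [:: N.-1; N])); rewrite -catA.
have Gb : goodP m be.
  split.
  - apply/perm_iota1P; split => //.
    by move=> y /Hbe; rewrite -/k Hm.
  - exact: Db.
  - by move=> h; apply: N1; rewrite Ew; apply: occ_catr.
  - by move=> h; apply: N2; rewrite Ew; apply: occ_catr.
exists j, m, (map (subn^~ k) al), be; split => //.
- by move: EN; rewrite Hj -/k Hm /N; lia.
- have := Dw (size al + 1); rewrite size_cat /= -addnS !nthD /=.
  move/(_ ltac:(lia)); rewrite odd_double /= => -[h _].
  by move: Hm; rewrite /k; lia.
- by rewrite /bA -Hm Ea.
Qed.

Lemma caseB n (al be : seq nat) :
  goodP n.+1 (al ++ n.+1.*2 :: (be ++ [:: n.+1.*2.-1])) ->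
  exists j m a b, [/\ j + m = n, goodP j a, goodP m b &
     al ++ n.+1.*2 :: (be ++ [:: n.+1.*2.-1]) = bB n.+1 m a b].
Proof.
set N := n.+1.*2 => -[Pw Dw N1 N2].
have [Uw Sw Rw] := (perm_iota1P _ _).1 Pw.
have Ew1 : al ++ N :: (be ++ [:: N.-1]) = (al ++ [:: N]) ++ (be ++ [:: N.-1]) by rewrite -catA.
have Ew2 : al ++ N :: (be ++ [:: N.-1]) = (al ++ N :: be) ++ [:: N.-1] by rewrite -catA.
have Hbe0 : forall y : nat, y \in be -> y < N.-1.
  move=> y Hy.
  have Ry := Rw y; rewrite !mem_cat !inE !mem_cat Hy !orbT in Ry; have {}Ry := Ry isT.
  have U1 := Uw; rewrite Ew1 in U1.
  have U2 := Uw; rewrite Ew2 in U2.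
  have h1 := uniq_catN (x := y) (y := N.-1) U2 ltac:(by rewrite mem_cat !inE Hy !orbT) ltac:(by rewrite inE).
  have h2 := uniq_catN (x := N) (y := y) U1 ltac:(by rewrite mem_cat !inE eqxx !orbT) ltac:(by rewrite mem_cat Hy).
  lia.
have Sep : forall x y : nat, x \in al -> y \in be -> y < x.
  move=> x y Hx Hy; rewrite ltnNge; apply/negP => Hle.
  have Hne := uniq_catN (y := y) Uw Hx ltac:(by rewrite !inE mem_cat Hy !orbT).
  have Hy' := Hbe0 y Hy.
  apply: N2; exists (index x al), (size al), (size al + (1 + index y be)), (size al + (1 + size be)).
  have ix : index x al < size al by rewrite index_mem.
  have iy : index y be < size be by rewrite index_mem.
  split; try lia.
    by rewrite size_cat /= size_cat /=; lia.
  rewrite /P2 !nthD nth_cat ix nth_index // -(addn0 (size al)) nthD /=.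
  rewrite nth_cat iy nth_index // -(addn0 (size be)) nthD /=.
  lia.
have N2' : 2 <= N by rewrite /N; lia.
have Pw' : perm_eq (al ++ [:: N; N.-1] ++ be) (iota 1 N).
  apply: perm_trans Pw; rewrite perm_cat2l /= perm_cons.
  by rewrite -cat1s perm_catC.
have Pm : perm_eq [:: N; N.-1] [:: N.-1; N].
  by apply/seq.permP => p /=; lia.
have [Hbe Hal EN Ual Ube] := vals Pw' Pm N2' Sep.
set k := size be.
have Dal : dumP al.
  apply: (dum_prefix (c := N) (r := be ++ [:: N.-1])) => //.
  by move=> x /Hal; lia.
have Hk : ~~ odd k.
  case: (posnP (size al)) => Hs.
    by move: EN; rewrite Hs /N; lia.
  have Hk1 : k.+1 \in al.
    have : k.+1 \in iota 1 N by rewrite mem_iota; lia.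
    rewrite -(perm_mem Pw) mem_cat !inE mem_cat !inE => /orP [] // /orP [/eqP|/orP [/Hbe|/eqP]]; lia.
  have := parity Dal Ual (fun x Hx => proj1 (andP (Hal x Hx))) Hk1; by rewrite /=; case: (odd k).
have [m Hm] : exists m, k = m.*2 by exists k./2; have := odd_double_half k; move: Hk; case: (odd k) => //= _ <-.
have [j Hj] : exists j, size al = j.*2 by exists (size al)./2; lia.
have [Ga Ea] := shift_good Hk Ual Hj (fun x Hx => ltac:(have := Hal x Hx; lia)) Dal
  (fun h => N1 (occ_catl _ h)) (fun h => N2 (occ_catl _ h)).
have Db : dumP be.
  apply: (dum_prefix (c := N.-1) (r := [::])) => //.
  by apply: (dum_suffix (A := al ++ [:: N])); rewrite -catA.
have Gb : goodP m be.
  split.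
  - apply/perm_iota1P; split => //.
    by move=> y /Hbe; rewrite -/k Hm.
  - exact: Db.
  - by move=> h; apply: N1; rewrite Ew1; apply: occ_catr; apply: occ_catl.
  - by move=> h; apply: N2; rewrite Ew1; apply: occ_catr; apply: occ_catl.
exists j, m, (map (subn^~ k) al), be; split => //.
- by move: EN; rewrite Hj -/k Hm /N; lia.
- by rewrite /bB -Hm Ea.
Qed.

Lemma decomp n (w : seq nat) : goodP n.+1 w ->
  exists j m a b, [/\ j + m = n, goodP j a, goodP m b &
     w = bB n.+1 m a b \/ (0 < m /\ w = bA n.+1 m a b)].
Proof.
set N := n.+1.*2 => G.
case: (G) => Pw Dw _ _.
have [Uw Sw Rw] := (perm_iota1P _ _).1 Pw.
have HN : N \in w by rewrite (perm_mem Pw) mem_iota /N; lia.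
have HN1 : N.-1 \in w by rewrite (perm_mem Pw) mem_iota /N; lia.
have Hodd1 : odd N.-1 by rewrite /N; lia.
case/splitPr: HN G Pw Dw Uw Sw Rw HN1 => al be' G Pw Dw Uw Sw Rw HN1.
rewrite mem_cat inE in HN1.
case/orP: HN1 => [HN1|/orP [/eqP|HN1]]; last 2 first.
- by rewrite /N; lia.
- case/splitPr: HN1 G Pw Dw Uw Sw Rw => b1 b2 G Pw Dw Uw Sw Rw.
  case: b2 G Pw Dw Uw Sw Rw => [|y b2] G Pw Dw Uw Sw Rw.
    have [j [m [a [b [E1 E2 E3 E4]]]]] := caseB G.
    by exists j, m, a, b; split => //; left.
  exfalso.
  have Ry : y \in al ++ N :: (b1 ++ [:: N.-1, y & b2]) by rewrite !(mem_cat, inE) eqxx !orbT.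
  have {}Ry := Rw y Ry.
  have Hp : nth 0 (al ++ N :: (b1 ++ [:: N.-1, y & b2])) (size al + (size b1).+1) = N.-1.
    by rewrite nthD /= -(addn0 (size b1)) nthD.
  have Hp1 : nth 0 (al ++ N :: (b1 ++ [:: N.-1, y & b2])) (size al + (size b1).+1).+1 = y.
    by rewrite -addnS nthD /= -(addn1 (size b1)) nthD.
  have := Dw (size al + (size b1).+1); rewrite Hp Hp1 Hodd1 !size_cat /=.
  move/(_ ltac:(rewrite size_cat /=; lia)); rewrite size_cat /= => -[|]; first lia.
  move=> Hy.
  have Hy' : y = N by lia.
  have E : al ++ N :: (b1 ++ [:: N.-1, y & b2]) = (al ++ [:: N]) ++ (b1 ++ [:: N.-1, y & b2]).
    by rewrite -catA.
  rewrite E in Uw.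
  have := uniq_catN (x := N) (y := y) Uw ltac:(by rewrite mem_cat inE eqxx orbT)
     ltac:(by rewrite !(mem_cat, inE) eqxx !orbT).
  by rewrite Hy' eqxx.
- case/splitPr: HN1 G Pw Dw Uw Sw Rw => a1 a2 G Pw Dw Uw Sw Rw.
  case: a2 G Pw Dw Uw Sw Rw => [|y a2] G Pw Dw Uw Sw Rw.
    rewrite -catA /= in G.
    have [j [m [a [b [E1 E2 E3 E4 E5]]]]] := caseA G.
    by exists j, m, a, b; split => //; right; rewrite -catA.
  exfalso.
  have Ry : y \in (a1 ++ [:: N.-1, y & a2]) ++ N :: be' by rewrite !(mem_cat, inE) eqxx !orbT.
  have {}Ry := Rw y Ry.
  have Hp : nth 0 ((a1 ++ [:: N.-1, y & a2]) ++ N :: be') (size a1) = N.-1.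
    by rewrite -catA -(addn0 (size a1)) nthD.
  have Hp1 : nth 0 ((a1 ++ [:: N.-1, y & a2]) ++ N :: be') (size a1).+1 = y.
    by rewrite -catA -(addn1 (size a1)) nthD.
  have := Dw (size a1); rewrite Hp Hp1 Hodd1 !size_cat /=.
  move/(_ ltac:(lia)) => [|]; first lia.
  move=> Hy.
  have Hy' : y = N by lia.
  have E : (a1 ++ [:: N.-1, y & a2]) ++ N :: be' = (a1 ++ [:: N.-1; y]) ++ (a2 ++ N :: be').
    by rewrite -!catA.
  rewrite E in Uw.
  have := uniq_catN (x := y) (y := N) Uw ltac:(by rewrite !(mem_cat, inE) eqxx !orbT)
     ltac:(by rewrite !(mem_cat, inE) eqxx !orbT).
  by rewrite Hy' eqxx.
Qed.


Definition blk (l : seq (seq (seq nat))) (j : nat) : seq (seq nat) :=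
  [seq bB (size l) ((size l).-1 - j) a b | a <- nth [::] l j, b <- nth [::] l ((size l).-1 - j)] ++
  (if 0 < (size l).-1 - j then
     [seq bA (size l) ((size l).-1 - j) a b | a <- nth [::] l j, b <- nth [::] l ((size l).-1 - j)]
   else [::]).

Definition step (l : seq (seq (seq nat))) := flatten [seq blk l j | j <- iota 0 (size l)].

Fixpoint Ls n := if n is n'.+1 then rcons (Ls n') (step (Ls n')) else [:: [:: [::]]].
Definition L n := nth [::] (Ls n) n.

Lemma size_Ls n : size (Ls n) = n.+1.
Proof. by elim: n => //= n IH; rewrite size_rcons IH. Qed.

Lemma nth_Ls n i : i <= n -> nth [::] (Ls n) i = L i.
Proof.
elim: n i => [|n IH] i Hi; first by case: i Hi.
case: (ltnP i n.+1) => h.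
  by rewrite /= nth_rcons size_Ls h IH.
by have -> : i = n.+1 by lia.
Qed.

Lemma LS n : L n.+1 = step (Ls n).
Proof. by rewrite /L /= nth_rcons size_Ls ltnn eqxx. Qed.

Lemma memLS n (w : seq nat) : w \in L n.+1 <->
  exists j m a b, [/\ j + m = n, a \in L j, b \in L m &
     w = bB n.+1 m a b \/ (0 < m /\ w = bA n.+1 m a b)].
Proof.
rewrite LS /step size_Ls; split.
  case/flattenP => s /mapP [j]; rewrite mem_iota => Hj -> {s}.
  rewrite /blk size_Ls /= mem_cat => /orP [].
    case/allpairsP => -[a b] /= [Ha Hb ->].
    exists j, (n - j), a, b; rewrite !nth_Ls in Ha Hb; try lia.
    by split => //; [lia | left].
  case: ifP => // Hm.
  case/allpairsP => -[a b] /= [Ha Hb ->].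
  exists j, (n - j), a, b; rewrite !nth_Ls in Ha Hb; try lia.
  by split => //; [lia | right].
case=> j [m [a [b [E Ha Hb Hw]]]].
apply/flattenP; exists (blk (Ls n) j).
  by apply/mapP; exists j => //; rewrite mem_iota; lia.
have Em : m = n - j by lia.
rewrite /blk size_Ls /= -Em !nth_Ls; try lia.
rewrite mem_cat; case: Hw => [->|[m0 ->]].
  by apply/orP; left; apply/allpairsP; exists (a, b).
by rewrite m0; apply/orP; right; apply/allpairsP; exists (a, b).
Qed.

Lemma good0 (w : seq nat) : goodP 0 w <-> w = [::].
Proof.
split.
  by case=> P _ _ _; have := perm_size P; case: w {P}.
move=> ->; split => //.
- by case=> i [j [k [l [_ _ _]]]].
- by case=> i [j [k [l [_ _ _]]]].
Qed.

Lemma memL n (w : seq nat) : w \in L n <-> goodP n w.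
Proof.
elim/ltn_ind: n w => -[|n] IH w.
  by rewrite good0 /L /= inE; split => /eqP.
rewrite memLS; split.
  case=> j [m [a [b [E Ha Hb Hw]]]].
  have Ga : goodP j a by apply/IH => //; lia.
  have Gb : goodP m b by apply/IH => //; lia.
  have E' : j + m + 1 = n.+1 by lia.
  case: Hw => [->|[m0 ->]]; rewrite -E'.
    exact: good_B.
  exact: good_A.
move/decomp => [j [m [a [b [E Ga Gb Hw]]]]].
exists j, m, a, b; split => //.
  by apply/IH => //; lia.
by apply/IH => //; lia.
Qed.

Lemma uniq_flatten_key (T K : eqType) (ks : seq K) (F : K -> seq T) (g : T -> K) :
  uniq ks -> (forall k, k \in ks -> uniq (F k)) ->
  (forall k x, k \in ks -> x \in F k -> g x = k) -> uniq (flatten (map F ks)).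
Proof.
elim: ks => //= k ks IH /andP [nk U] HU Hg.
rewrite cat_uniq HU ?mem_head //= IH //; last 2 first.
- by move=> k' Hk'; apply: HU; rewrite inE Hk' orbT.
- by move=> k' x Hk' Hx; apply: Hg => //; rewrite inE Hk' orbT.
rewrite andbT; apply/hasPn => x /flattenP [s /mapP [k' Hk' ->] Hx]; apply/negP => HxF.
have e1 := Hg k x (mem_head _ _) HxF.
have e2 := Hg k' x ltac:(by rewrite inE Hk' orbT) Hx.
by move: nk; rewrite -e1 e2 Hk'.
Qed.

Lemma goodP_size n (w : seq nat) : goodP n w -> size w = n.*2.
Proof. by case=> P _ _ _; rewrite (perm_size P) size_iota. Qed.

Lemma notin_shift j m (a : seq nat) N : goodP j a -> m.*2 + j.*2 < N -> N \notin map (addn m.*2) a.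
Proof.
case=> P _ _ _ HN; have [_ _ R] := (perm_iota1P _ _).1 P.
by apply/mapP => -[y /R Hy E]; lia.
Qed.

Lemma index_bB j m (a b : seq nat) : goodP j a ->
  index (j + m + 1).*2 (bB (j + m + 1) m a b) = j.*2.
Proof.
move=> G; rewrite /bB index_cat (negbTE (notin_shift G _)); last lia.
by rewrite size_map (goodP_size G) /= eqxx addn0.
Qed.

Lemma index_bA j m (a b : seq nat) : goodP j a ->
  index (j + m + 1).*2 (bA (j + m + 1) m a b) = j.*2.+1.
Proof.
move=> G; rewrite /bA index_cat (negbTE (notin_shift G _)); last lia.
rewrite size_map (goodP_size G) /=.
have -> : ((j + m + 1).*2.-1 == (j + m + 1).*2) = false by lia.
by rewrite /= eqxx addn1.
Qed.

Lemma bB_inj n m (a b a' b' : seq nat) : size a = size a' ->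
  bB n m a b = bB n m a' b' -> a = a' /\ b = b'.
Proof.
move=> S; rewrite /bB => /eqP; rewrite eqseq_cat ?size_map // => /andP [/eqP Ea /eqP [Eb]].
split; first exact: inj_map (@addnI _) _ _ Ea.
by move: Eb; rewrite !cats1; apply: rcons_injl.
Qed.

Lemma bA_inj n m (a b a' b' : seq nat) : size a = size a' ->
  bA n m a b = bA n m a' b' -> a = a' /\ b = b'.
Proof.
move=> S; rewrite /bA => /eqP; rewrite eqseq_cat ?size_map // => /andP [/eqP Ea /eqP [Eb]].
by split; first exact: inj_map (@addnI _) _ _ Ea.
Qed.

Lemma uniqL n : uniq (L n).
Proof.
elim/ltn_ind: n => -[|n] IH; first by [].
rewrite LS /step size_Ls.
apply: (uniq_flatten_key (g := fun w : seq nat => (index n.+1.*2 w)./2)).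
- exact: iota_uniq.
- move=> j; rewrite mem_iota => Hj.
  have Ej : j + (n - j) + 1 = n.+1 by lia.
  have Hkey : forall a, a \in L j -> goodP j a by move=> a /memL.
  rewrite /blk size_Ls /= !nth_Ls; try lia.
  rewrite cat_uniq; apply/and3P; split.
  + apply: allpairs_uniq; try (apply: IH; lia).
    move=> [a b] [a' b'] /allpairsP [[x y] /= [Hx Hy [-> ->]]] /allpairsP [[x' y'] /= [Hx' Hy' [-> ->]]] /=.
    move/bB_inj; rewrite (goodP_size (Hkey _ Hx)) (goodP_size (Hkey _ Hx')) => /(_ erefl) [-> ->] //.
  + case: ifP => // _; apply/hasPn => w /allpairsP [[a b] /= [Ha Hb ->]].
    apply/negP => /allpairsP [[a' b'] /= [Ha' Hb' E]].
    have := index_bA (n - j) b (Hkey _ Ha); rewrite Ej E -Ej index_bB; last exact: Hkey.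
    by lia.
  + case: ifP => // _; apply: allpairs_uniq; try (apply: IH; lia).
    move=> [a b] [a' b'] /allpairsP [[x y] /= [Hx Hy [-> ->]]] /allpairsP [[x' y'] /= [Hx' Hy' [-> ->]]] /=.
    move/bA_inj; rewrite (goodP_size (Hkey _ Hx)) (goodP_size (Hkey _ Hx')) => /(_ erefl) [-> ->] //.
- move=> j w; rewrite mem_iota => Hj.
  have Ej : j + (n - j) + 1 = n.+1 by lia.
  have Hkey : forall a, a \in L j -> goodP j a by move=> a /memL.
  rewrite /blk size_Ls /= !nth_Ls ?mem_cat; try lia.
  case/orP => [|].
    case/allpairsP => -[a b] /= [Ha Hb ->].
    by rewrite -Ej index_bB; [exact: doubleK | exact: Hkey].
  case: ifP => _; last by rewrite in_nil.
  case/allpairsP => -[a b] /= [Ha Hb ->].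
  rewrite -Ej index_bA; [exact: uphalf_double | exact: Hkey].
Qed.


Lemma sizeLS n : size (L n.+1) =
  \sum_(0 <= j < n.+1) (size (L j) * size (L (n - j)) + (0 < n - j) * (size (L j) * size (L (n - j)))).
Proof.
rewrite LS /step size_flatten size_Ls sumnE /shape -map_comp big_map.
rewrite /index_iota subn0; apply: eq_big_seq => j; rewrite mem_iota => Hj /=.
rewrite /blk size_Ls /= size_cat size_allpairs !nth_Ls; try lia.
by case: ifP => _; rewrite ?size_allpairs /=; lia.
Qed.

Lemma sizeL0 : size (L 0) = 1. Proof. by []. Qed.

Lemma sizeL_rec n : size (L n.+1) + size (L n) =
  2 * \sum_(0 <= j < n.+1) (size (L j) * size (L (n - j))).
Proof.
rewrite sizeLS big_split /=.
have H1 : \sum_(0 <= i < n.+1) (0 < n - i) * (size (L i) * size (L (n - i))) =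
          \sum_(0 <= i < n) (size (L i) * size (L (n - i))).
  rewrite big_nat_recr //= subnn mul0n addn0.
  apply: eq_big_nat => i Hi; have -> : 0 < n - i by lia.
  by rewrite mul1n.
have H2 : \sum_(0 <= i < n.+1) (size (L i) * size (L (n - i))) =
          \sum_(0 <= i < n) (size (L i) * size (L (n - i))) + size (L n).
  by rewrite big_nat_recr //= subnn sizeL0 muln1.
rewrite H1 H2; lia.
Qed.

Lemma size_schr m : size (schr_list m) = m.+1.
Proof. by elim: m => //= m IH; rewrite size_rcons IH. Qed.

Lemma nth_schr m i : i <= m -> nth 0%R (schr_list m) i = little_schroder i.
Proof.
elim: m i => [|m IH] i Hi; first by case: i Hi.
case: (ltnP i m.+1) => h.
  by rewrite /= nth_rcons size_schr h IH.
by have -> : i = m.+1 by lia.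
Qed.

Lemma ls_succ m : little_schroder m.+1 = schr_next (schr_list m).
Proof. by rewrite /little_schroder /= nth_rcons size_schr ltnn eqxx. Qed.

Section SZ.
Import GRing.Theory Num.Theory.
Local Open Scope ring_scope.

Lemma sizeL n : (size (L n))%:Z = little_schroder n.+1.
Proof.
elim/ltn_ind: n => -[|n] IH.
  by rewrite ls_succ /schr_next /= big_geq.
rewrite ls_succ /schr_next size_schr /=.
rewrite big_add1 /=.
have -> : \sum_(0 <= i < n.+1) (schr_list n.+1)`_i.+1 * (schr_list n.+1)`_(n.+2 - i.+1) =
          (\sum_(0 <= i < n.+1) (size (L i) * size (L (n - i)))%N)%:Z.
  rewrite (big_morph Posz PoszD (erefl 0%:Z)).
  apply: eq_big_nat => i Hi.
  rewrite !nth_schr; try lia.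
  rewrite subSS PoszM IH; last lia.
  by rewrite (_ : (n.+1 - i = (n - i).+1)%N); [rewrite IH //; lia | lia].
rewrite nth_rcons size_schr ltnn eqxx -ls_succ -IH //.
have := sizeL_rec n.
set S := \sum_(0 <= j < n.+1) _.
move=> E.
have E' : (size (L n.+1))%:Z = (2 * S)%N%:Z - (size (L n))%:Z by rewrite -E PoszD addrK.
rewrite E' PoszM.
by rewrite addr0.
Qed.
End SZ.

Theorem theorem3p4 (n : nat) :
  (#|[set s : 'S_(n.*2) | [&& dumont1 s,
                               avoids (word s) [:: 1; 3; 4; 2]%N
                             & avoids (word s) [:: 1; 4; 2; 3]%N]]|%:Z
   = little_schroder n.+1)%R.
Proof.
rewrite -sizeL; congr Posz.
rewrite cardE -(size_map (@word _)).
apply: perm_size; apply: uniq_perm.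
- by rewrite map_inj_uniq ?enum_uniq //; exact: word_inj.
- exact: uniqL.
- move=> w; apply/idP/idP.
  + case/mapP => s; rewrite mem_enum inE => /and3P [D A1 A2] ->.
    apply/memL; split.
    * exact: word_perm.
    * exact/dumontP.
    * by move/contains_occ1; apply/negP.
    * by move/contains_occ2; apply/negP.
  + move/memL => [P D N1 N2]; have [s Es] := perm_word P.
    apply/mapP; exists s => //; rewrite mem_enum inE Es; apply/and3P; split.
    * by rewrite /dumont1 Es; apply/dumontP.
    * by apply/negP => /contains_occ1.
    * by apply/negP => /contains_occ2.
Qed.
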